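(* Let $r\ge 2$, $e\ge 1$ and $0\le p\le\lfloor re/2\rfloor$ be integers, and let $Q$ be a generic binary form of degree $r$ (i.e. with indeterminate coefficients). Then the transvectant $(Q^e,Q^e)_{2p}$ is not identically zero.
   Context: For binary forms $A(x_0,x_1)$, $B(x_0,x_1)$ of degrees $a,b$ and an integer $k\ge0$, the $k$-th transvectant is $(A,B)_k=\frac{(a-k)!\,(b-k)!}{a!\,b!}\bigl[\Omega^k A(x_0,x_1)B(y_0,y_1)\bigr]_{\underline{y}:=\underline{x}}$, where $\Omega=\frac{\partial^2}{\partial x_0\partial y_1}-\frac{\partial^2}{\partial x_1\partial y_0}$ (Cayley's Omega operator); it is a binary form of degree $a+b-2k$. *)

(* Defs.v *)
From HB Require Import structures.
From mathcomp Require Import all_boot all_order all_algebra.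
From mathcomp Require Import mpoly.
Set Implicit Arguments. Unset Strict Implicit. Unset Printing Implicit Defensive.
Import GRing.Theory.
Local Open Scope ring_scope.

(* Binary forms over a commutative ring R are elements of {mpoly R[2]},
   variable 0 = x_0, variable 1 = x_1.  For Omega we work in {mpoly R[4]}
   with variables 0,1,2,3 = x_0, x_1, y_0, y_1. *)

Section Transvectant.
Variable R : comRingType.

Definition X4 (i : nat) : {mpoly R[4]} := 'X_(inord i).

Definition liftx (A : {mpoly R[2]}) : {mpoly R[4]} := A \mPo [tuple X4 0; X4 1].
Definition lifty (B : {mpoly R[2]}) : {mpoly R[4]} := B \mPo [tuple X4 2; X4 3].

Definition Omega (P : {mpoly R[4]}) : {mpoly R[4]} :=
  mderiv (inord 0) (mderiv (inord 3) P) - mderiv (inord 1) (mderiv (inord 2) P).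

Definition diagxy (P : {mpoly R[4]}) : {mpoly R[2]} :=
  P \mPo [tuple 'X_(inord 0); 'X_(inord 1); 'X_(inord 0); 'X_(inord 1)].

End Transvectant.

Section TransvectantField.
Variable F : fieldType.

Definition transvectant (m : nat) (a b k : nat) (A B : {mpoly {mpoly F[m]}[2]})
  : {mpoly {mpoly F[m]}[2]} :=
  ((((a - k)`! * (b - k)`!)%:R / (a`! * b`!)%:R : F)%:MP)%:MP *
  diagxy (iter k (@Omega _) (liftx A * lifty B)).

Definition generic_form (r : nat) : {mpoly {mpoly F[r.+1]}[2]} :=
  \sum_(i < r.+1) ('X_i)%:MP * 'X_(inord 0) ^+ (r - i) * 'X_(inord 1) ^+ i.

End TransvectantField.

(* Main.v *)
From HB Require Import structures.
From mathcomp Require Import all_boot all_order all_algebra.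
From mathcomp Require Import mpoly zify.
Require Import Defs.
Set Implicit Arguments. Unset Strict Implicit. Unset Printing Implicit Defensive.
Import GRing.Theory.
Local Open Scope ring_scope.

Section Binom.
Variables (R : comRingType) (V : lmodType R).
Variables (f g : V -> V).
Hypotheses (fD : {morph f : x y / x + y}) (gD : {morph g : x y / x + y}).
Hypotheses (fZ : forall c x, f (c *: x) = c *: f x) (gZ : forall c x, g (c *: x) = c *: g x).
Hypothesis fg : forall x, f (g x) = g (f x).

Lemma f0 : f 0 = 0.
Proof. by have := fZ 0 0; rewrite !scale0r. Qed.
Lemma g0 : g 0 = 0.
Proof. by have := gZ 0 0; rewrite !scale0r. Qed.

Lemma giter j x : g (iter j f x) = iter j f (g x).
Proof. by elim: j => //= j IH; rewrite -fg IH. Qed.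

Lemma iter_binom k x :
  iter k (fun y => f y - g y) x =
  \sum_(j < k.+1) ((-1) ^+ (k - j) *+ 'C(k, j)) *: iter j f (iter (k - j) g x).
Proof.
elim: k => [|k IH]; first by rewrite big_ord1 /= expr0 mulr1n scale1r.
rewrite iterS IH.
have hD : {morph (fun y => f y - g y) : a b / a + b}.
  by move=> a b /=; rewrite fD gD addrACA opprD.
rewrite (big_morph (fun y => f y - g y) hD (id1 := 0)) /=; last by rewrite f0 g0 subrr.
pose a j := iter j f (iter (k.+1 - j) g x).
transitivity (\sum_(j < k.+1) ((-1) ^+ (k - j) *+ 'C(k, j)) *: a j.+1
   - \sum_(j < k.+1) ((-1) ^+ (k - j) *+ 'C(k, j)) *: a j).
  rewrite -sumrB; apply: eq_bigr => j _.
  rewrite fZ gZ /a; congr (_ *: _ - _ *: _).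
  rewrite giter subSn; last by rewrite -ltnS.
  by [].
transitivity (\sum_(j < k.+2) ((-1) ^+ (k.+1 - j) *+ 'C(k, j.-1) *+ (0 < j)%N) *: a j
   + \sum_(j < k.+2) ((-1) ^+ (k.+1 - j) *+ 'C(k, j)) *: a j).
  rewrite [X in _ = X + _]big_ord_recl /= mulr0n scale0r add0r.
  rewrite [X in _ = _ + X]big_ord_recr /= bin_small // mulr0n scale0r addr0.
  rewrite -sumrN; congr (_ + _); apply: eq_bigr => j _.
    rewrite subSn; last by rewrite -ltnS.
    by rewrite exprS mulN1r mulNrn scaleNr.
rewrite -big_split /=; apply: eq_bigr => j _.
rewrite -scalerDl; congr (_ *: _).
case: j => [[|j] Hj] /=; first by rewrite mulr0n add0r !bin0.
by rewrite mulr1n -mulrnDr binS addnC.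
Qed.
End Binom.

Section Lift.
Variable R : comRingType.

Definition i0 : 'I_2 := ord0.
Definition i1 : 'I_2 := ord_max.

Definition L2 (a b : nat) (A : {mpoly R[2]}) : {mpoly R[4]} :=
  A \mPo [tuple X4 R a; X4 R b].

Definition mm (a b : nat) (m : 'X_{1..2}) : 'X_{1..4} :=
  (U_(inord a) *+ m i0 + U_(inord b) *+ m i1)%MM.

Lemma L2X a b m : 'X_[m] \mPo [tuple X4 R a; X4 R b] = 'X_[mm a b m].
Proof.
rewrite comp_mpolyX big_ord_recr big_ord1 /= /mm mpolyXD !mpolyXn.
by have -> : widen_ord (leqnSn 1) ord0 = i0 by apply: val_inj.
Qed.

Lemma L2_deriv a b (i : 'I_4) (A : {mpoly R[2]}) :
  (a < 4)%N -> (b < 4)%N -> a != b ->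
  mderiv i (L2 a b A) =
    (i == inord a)%:R *: L2 a b (mderiv i0 A) + (i == inord b)%:R *: L2 a b (mderiv i1 A).
Proof.
move=> ha hb hab.
have hab' : (inord a : 'I_4) != inord b.
  by apply: contra hab => /eqP/(congr1 val) /=; rewrite !inordK // => ->.
elim/mpolyind: A => [|c m p _ _ IH].
  by rewrite /L2 !comp_mpoly0 !mderiv0 comp_mpoly0 !scaler0 addr0.
rewrite /L2 !(comp_mpolyD, mderivD, comp_mpolyZ, mderivZ) IH.
rewrite !scalerDr addrACA; congr (_ + _).
rewrite !L2X !mderivX !comp_mpolyZ !L2X !scalerA ![_ * c]mulrC -!scalerA -scalerDr.
congr (_ *: _).
have e1 : forall j : 'I_4, mm a b m j = ((j == inord a) * m i0 + (j == inord b) * m i1)%N.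
  by move=> j; rewrite /mm mnmDE !mulmnE !mnm1E ![(_ == j)]eq_sym.
have eX : forall (j : 'I_2) (k : 'I_2), (m - U_(j))%MM k = (m k - (j == k))%N.
  by move=> j k; rewrite mnmBE mnm1E.
rewrite e1.
have [-> | hia] := eqVneq i (inord a).
  rewrite (negbTE hab') /= mul1n mul0n addn0 scale1r scale0r addr0.
  congr (_ *: _); congr (mpolyX _ _); apply/mnmP => j.
  rewrite mnmBE e1 /mm mnmDE !mulmnE !mnm1E !eX /= subn0.
  have [-> | hja] := eqVneq j (inord a).
    by rewrite (negbTE hab') eq_sym (negbTE hab') /=; lia.
  by rewrite [inord b == _]eq_sym; case: (j == inord b) => /=; lia.
rewrite /= mul0n add0n scale0r add0r.
have [-> | hib] := eqVneq i (inord b).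
  rewrite /= mul1n scale1r.
  congr (_ *: _); congr (mpolyX _ _); apply/mnmP => j.
  rewrite mnmBE e1 /mm mnmDE !mulmnE !mnm1E !eX /= subn0.
  have [-> | hjb] := eqVneq j (inord b).
    by rewrite eq_sym (negbTE hab') /=; lia.
  by rewrite [inord a == _]eq_sym; case: (j == inord a) => /=; lia.
by rewrite /= mul0n !scale0r.
Qed.

Lemma inord_eq (x y : nat) : (x < 4)%N -> (y < 4)%N ->
  ((inord x : 'I_4) == inord y) = (x == y).
Proof.
move=> hx hy; apply/eqP/eqP => [/(congr1 val)|->//].
by rewrite /= !inordK.
Qed.

Definition D1 (P : {mpoly R[4]}) := mderiv (inord 0) (mderiv (inord 3) P).
Definition D2 (P : {mpoly R[4]}) := mderiv (inord 1) (mderiv (inord 2) P).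

Lemma D1_lift A B : D1 (liftx A * lifty B) = liftx (mderiv i0 A) * lifty (mderiv i1 B).
Proof.
rewrite /D1 mderivM.
rewrite [mderiv _ (liftx A)](@L2_deriv 0 1) // [mderiv _ (lifty B)](@L2_deriv 2 3) //.
rewrite !inord_eq //= !scale0r !scale1r !add0r mul0r add0r.
rewrite mderivM [mderiv _ (liftx A)](@L2_deriv 0 1) // [mderiv _ (lifty _)](@L2_deriv 2 3) //.
by rewrite !inord_eq //= !scale0r !scale1r !add0r !addr0 mulr0 addr0.
Qed.

Lemma D2_lift A B : D2 (liftx A * lifty B) = liftx (mderiv i1 A) * lifty (mderiv i0 B).
Proof.
rewrite /D2 mderivM.
rewrite [mderiv _ (liftx A)](@L2_deriv 0 1) // [mderiv _ (lifty B)](@L2_deriv 2 3) //.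
rewrite !inord_eq //= !scale0r !scale1r !add0r !addr0 mul0r add0r.
rewrite mderivM [mderiv _ (liftx A)](@L2_deriv 0 1) // [mderiv _ (lifty _)](@L2_deriv 2 3) //.
by rewrite !inord_eq //= !scale0r !scale1r !add0r ?addr0 mulr0 addr0.
Qed.

Lemma iterD2 i A B : iter i D2 (liftx A * lifty B) =
  liftx (iter i (mderiv i1) A) * lifty (iter i (mderiv i0) B).
Proof. by elim: i => //= i ->; rewrite D2_lift. Qed.

Lemma iterD1 i A B : iter i D1 (liftx A * lifty B) =
  liftx (iter i (mderiv i0) A) * lifty (iter i (mderiv i1) B).
Proof. by elim: i => //= i ->; rewrite D1_lift. Qed.

Definition w2 (i : 'I_2) : R := ((i : nat) == 0%N)%:R.
Definition v4 (i : 'I_4) : R := (((i : nat) == 0%N) || ((i : nat) == 2%N))%:R.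

Lemma liftx_eval A : (liftx A).@[v4] = A.@[w2].
Proof.
rewrite /liftx comp_mpoly_meval; apply: meval_eq => -[[|[|i]] Hi] //.
- by rewrite (tnth_nth 0) /= /X4 mevalXU /v4 /w2 /= inordK.
- by rewrite (tnth_nth 0) /= /X4 mevalXU /v4 /w2 /= inordK.
Qed.

Lemma lifty_eval A : (lifty A).@[v4] = A.@[w2].
Proof.
rewrite /lifty comp_mpoly_meval; apply: meval_eq => -[[|[|i]] Hi] //.
- by rewrite (tnth_nth 0) /= /X4 mevalXU /v4 /w2 /= inordK.
- by rewrite (tnth_nth 0) /= /X4 mevalXU /v4 /w2 /= inordK.
Qed.

Lemma inord2_0 : (inord 0 : 'I_2) = i0.
Proof. by apply: val_inj; rewrite /= inordK. Qed.
Lemma inord2_1 : (inord 1 : 'I_2) = i1.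
Proof. by apply: val_inj; rewrite /= inordK. Qed.

Lemma diag_eval G : (diagxy G).@[w2] = G.@[v4].
Proof.
rewrite /diagxy comp_mpoly_meval; apply: meval_eq => -[[|[|[|[|i]]]] Hi] //;
  by rewrite (tnth_nth 0) /= mevalXU /v4 /w2 /= inordK.
Qed.


Lemma main_formula (A B : {mpoly R[2]}) k :
  (diagxy (iter k (@Omega R) (liftx A * lifty B))).@[w2] =
  \sum_(j < k.+1) ((-1) ^+ (k - j) *+ 'C(k, j)) *
     ((iter j (mderiv i0) (iter (k - j) (mderiv i1) A)).@[w2] *
      (iter j (mderiv i1) (iter (k - j) (mderiv i0) B)).@[w2]).
Proof.
rewrite diag_eval.
have -> : @Omega R = fun y => D1 y - D2 y by [].
rewrite (@iter_binom R _ D1 D2); last first.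
- move=> x; rewrite /D1 /D2.
  rewrite (mderiv_comm (inord 1 : 'I_4) (inord 3) (mderiv (inord 2) x)).
  rewrite (mderiv_comm (inord 2 : 'I_4) (inord 3) x).
  rewrite (mderiv_comm (inord 1 : 'I_4) (inord 0) (mderiv (inord 2) (mderiv (inord 3) x))).
  by rewrite (mderiv_comm (inord 2 : 'I_4) (inord 0) (mderiv (inord 3) x)).
- by move=> c x; rewrite /D2 !mderivZ.
- by move=> c x; rewrite /D1 !mderivZ.
- by move=> x y; rewrite /D2 !mderivD.
- by move=> x y; rewrite /D1 !mderivD.
rewrite raddf_sum; apply: eq_bigr => j _.
by rewrite /= (mevalZ v4 ((-1) ^+ (k - j) *+ 'C(k, j))) iterD2 iterD1 mevalM liftx_eval lifty_eval.
Qed.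

End Lift.

Section Map.
Variables (R S : comRingType) (f : {rmorphism R -> S}) (n : nat).

Lemma map_meval (P : {mpoly R[n]}) v : f (P.@[v]) = (map_mpoly f P).@[f \o v].
Proof.
elim/mpolyind: P => [|c m p _ _ IH]; first by rewrite !raddf0.
rewrite mevalD rmorphD raddfD /= mevalD IH; congr (_ + _).
rewrite mevalZ rmorphM map_mpolyZ mevalZ map_mpolyX !mevalX rmorph_prod /=.
by congr (_ * _); apply: eq_bigr => i _; rewrite rmorphXn.
Qed.

Lemma map_mderiv i (P : {mpoly R[n]}) : map_mpoly f (mderiv i P) = mderiv i (map_mpoly f P).
Proof.
by apply/mpolyP => m; rewrite mcoeff_map_mpoly !mcoeff_mderiv raddfMn mcoeff_map_mpoly.
Qed.

Lemma map_iter_mderiv i k (P : {mpoly R[n]}) :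
  map_mpoly f (iter k (mderiv i) P) = iter k (mderiv i) (map_mpoly f P).
Proof. by elim: k => //= k IH; rewrite map_mderiv IH. Qed.
End Map.

Lemma sum_even (V : zmodType) (g : nat -> V) r : (forall i, odd i -> g i = 0) ->
  \sum_(0 <= i < r.+1) g i = \sum_(0 <= j < (r./2).+1) g (j.*2).
Proof.
move=> godd; elim: r => [|r IH]; first by rewrite !big_nat1.
rewrite big_nat_recr //= IH.
case hr: (odd r); rewrite uphalf_half hr /=.
- rewrite [in RHS]big_nat_recr //=; congr (_ + _); congr (g _).
  by rewrite doubleS -[in LHS](odd_double_half r) hr.
- by rewrite godd ?addr0 //= hr.
Qed.

Section Spec.
Variable F : fieldType.

Definition sn (H : nat) (i : nat) : F := if odd i then 0 else ('C(H, i./2))%:R.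
Definition sp (r : nat) (i : 'I_r.+1) : F := sn (r./2) i.

Lemma Qspec r : map_mpoly (meval (@sp r)) (generic_form F r) =
  'X_(inord 0) ^+ (odd r) * ('X_(inord 0) ^+ 2 + 'X_(inord 1) ^+ 2) ^+ (r./2).
Proof.
rewrite /generic_form rmorph_sum /=.
transitivity (\sum_(0 <= i < r.+1)
   ((sn (r./2) i)%:MP * 'X_(inord 0) ^+ (r - i) * 'X_(inord 1) ^+ i) : {mpoly F[2]}).
  rewrite big_mkord; apply: eq_bigr => i _.
  rewrite !rmorphM !rmorphXn /= map_mpolyC !map_mpolyX; congr (_ * _ * _); congr (_%:MP); exact: mevalXU.
rewrite sum_even; last by move=> i hi; rewrite /sn hi mpolyC0 !mul0r.
rewrite exprDn mulr_sumr big_mkord; apply: eq_bigr => j _.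
rewrite /sn odd_double doubleK mpolyC_nat mulr_natl mulrnAl !mulrnAr; congr (_ *+ _).
rewrite -!exprM mulrA -exprD; congr (_ ^+ _ * _ ^+ _).
- have := odd_double_half r; have := ltn_ord j; rewrite -!muln2; lia.
- by rewrite -muln2 mulnC.
Qed.
End Spec.

Section Emon.
Variable R : comRingType.

Definition mon2 (u v : nat) : 'X_{1..2} := (U_(i0) *+ u + U_(i1) *+ v)%MM.

Lemma X0X1 u v : 'X_(inord 0) ^+ u * 'X_(inord 1) ^+ v = 'X_[mon2 u v] :> {mpoly R[2]}.
Proof. by rewrite /mon2 mpolyXD !mpolyXn inord2_0 inord2_1. Qed.

Lemma iter_mderivX i k (m : 'X_{1..2}) :
  iter k (mderiv i) ('X_[m] : {mpoly R[2]}) = ((m i)^_k)%:R *: 'X_[m - U_(i) *+ k].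
Proof. by rewrite -mderivn_iter mderivnX. Qed.

Lemma iter_mderivZ i k c (P : {mpoly R[2]}) :
  iter k (mderiv i) (c *: P) = c *: iter k (mderiv i) P.
Proof. by elim: k => //= k ->; rewrite mderivZ. Qed.

Lemma Emon u v a b :
  (iter a (mderiv i0) (iter b (mderiv i1) ('X_[mon2 u v] : {mpoly R[2]}))).@[@w2 R] =
  (u ^_ a * v ^_ b * (v - b == 0)%N)%:R.
Proof.
rewrite iter_mderivX iter_mderivZ iter_mderivX !mevalZ mevalX big_ord_recr big_ord1 /w2 /=.
rewrite !mnmBE !mnmDE !mulmnE !mnm1E /=.
rewrite !mul0n !mul1n !add0n !addn0 !subn0 expr1n mul1r expr0n !natrM.
by rewrite mulrCA mulrA.
Qed.

Lemma Aexp al M : ('X_(inord 0) ^+ al * ('X_(inord 0) ^+ 2 + 'X_(inord 1) ^+ 2) ^+ M : {mpoly R[2]}) =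
  \sum_(i < M.+1) 'X_[mon2 (al + (M - i).*2) (i.*2)] *+ 'C(M, i).
Proof.
rewrite exprDn mulr_sumr; apply: eq_bigr => i _.
by rewrite mulrnAr -X0X1 mulrA -!exprM -exprD -!muln2 ![(2 * _)%N]mulnC.
Qed.

Definition Nf al M a b := (\sum_(i < M.+1) 'C(M, i) * ((al + (M - i).*2) ^_ a * (i.*2) ^_ b * (i.*2 - b == 0)%N))%N.

Lemma iter_mderiv_sum i k I (r : seq I) (P : I -> {mpoly R[2]}) :
  iter k (mderiv i) (\sum_(j <- r) P j) = \sum_(j <- r) iter k (mderiv i) (P j).
Proof. rewrite -mderivn_iter raddf_sum; apply: eq_bigr => j _. exact: mderivn_iter. Qed.

Lemma iter_mderivMn i k c (P : {mpoly R[2]}) :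
  iter k (mderiv i) (P *+ c) = iter k (mderiv i) P *+ c.
Proof. by rewrite -!mderivn_iter raddfMn. Qed.

Lemma E_A al M a b :
  (iter a (mderiv i0) (iter b (mderiv i1)
     ('X_(inord 0) ^+ al * ('X_(inord 0) ^+ 2 + 'X_(inord 1) ^+ 2) ^+ M : {mpoly R[2]}))).@[@w2 R]
  = (Nf al M a b)%:R.
Proof.
rewrite Aexp !iter_mderiv_sum raddf_sum /Nf natr_sum; apply: eq_bigr => i _.
rewrite !iter_mderivMn raddfMn /= Emon; apply: esym; by rewrite mulnC natrM mulr_natr.
Qed.

End Emon.

Lemma Nf_odd al M a b : odd b -> Nf al M a b = 0%N.
Proof.
move=> hb; apply: big1 => i _.
case h: (i.*2 - b == 0)%N; last by rewrite !muln0.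
have hlt : (i.*2 < b)%N.
  rewrite ltn_neqAle -subn_eq0 h andbT; apply/eqP => e2.
  by move: hb; rewrite -e2 odd_double.
by rewrite (ffact_small hlt) !muln0 ?mul0n.
Qed.

Lemma Nf_pos al M a i : (i <= M)%N -> (a + i.*2 <= al + M.*2)%N -> (0 < Nf al M a (i.*2))%N.
Proof.
move=> hi ha; rewrite /Nf (bigD1 (Ordinal (hi : (i < M.+1)%N))) //= addn_gt0; apply/orP; left.
rewrite subnn eqxx muln1 !muln_gt0 bin_gt0 hi !ffact_gt0 leqnn andbT /=.
by rewrite -!muln2 in ha *; lia.
Qed.


Lemma iter_comm (R : comRingType) n (i j : 'I_n) a b (P : {mpoly R[n]}) :
  iter a (mderiv i) (iter b (mderiv j) P) = iter b (mderiv j) (iter a (mderiv i) P).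
Proof. by rewrite -!mderivn_iter -!mderivmDm addmC. Qed.

Theorem mainTheorem4 (F : fieldType) (F_char0 : [pchar F] =i pred0)
  (r e p : nat) (hr : (2 <= r)%N) (he : (1 <= e)%N) (hp : (p <= (r * e)./2)%N) :
  transvectant (r * e) (r * e) (2 * p)
    (generic_form F r ^+ e) (generic_form F r ^+ e) != 0.
Proof.
have natF := (pcharf0P F).1 F_char0.
set n := (r * e)%N; set k := (2 * p)%N.
set G := generic_form F r ^+ e.
set H := r./2; set al := (odd r * e)%N; set M := (H * e)%N.
have hA : map_mpoly (meval (@sp F r)) G =
    'X_(inord 0) ^+ al * ('X_(inord 0) ^+ 2 + 'X_(inord 1) ^+ 2) ^+ M.
  by rewrite rmorphXn /= Qspec exprMn -!exprM.
set c : F := (((n - k)`! * (n - k)`!)%:R / (n`! * n`!)%:R).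
have hc : c != 0.
  by rewrite mulf_neq0 // ?invr_neq0 // natF -lt0n !muln_gt0 !fact_gt0.
have hw : meval (@sp F r) \o @w2 _ =1 @w2 F.
  by move=> i; rewrite /w2 /= rmorph_nat.
have key : meval (@sp F r) ((transvectant n n k G G).@[@w2 _]) =
   c * \sum_(j < k.+1) ((-1) ^+ (k - j) *+ 'C(k, j)) *
     ((Nf al M j (k - j))%:R * (Nf al M (k - j) j)%:R).
  rewrite /transvectant mevalM mevalC main_formula rmorphM /= mevalC.
  congr (_ * _); rewrite rmorph_sum; apply: eq_bigr => j _.
  rewrite !rmorphM /= rmorphMn rmorphXn rmorphN1; congr (_ * (_ * _)).
    by rewrite map_meval !map_iter_mderiv hA (meval_eq _ hw) E_A.
  by rewrite map_meval !map_iter_mderiv hA (meval_eq _ hw) iter_comm E_A.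
have hsum : \sum_(j < k.+1) ((-1) ^+ (k - j) *+ 'C(k, j)) *
     ((Nf al M j (k - j))%:R * (Nf al M (k - j) j)%:R) =
   (\sum_(j < k.+1) 'C(k, j) * (Nf al M j (k - j) * Nf al M (k - j) j))%:R :> F.
  rewrite natr_sum; apply: eq_bigr => j _.
  have [ho | ho] := boolP (odd (k - j)).
    by rewrite Nf_odd // mul0n muln0 mul0r mulr0.
  by rewrite -signr_odd (negbTE ho) expr0 !natrM mulr_natl.
have hn : (al + M.*2)%N = n.
  by rewrite /al /M /n /H -{3}(odd_double_half r) mulnDl doubleMl.
have hk : (k <= n)%N.
  have := odd_double_half (r * e); rewrite -/n -(leq_double p) in hp.
  by rewrite /k mul2n; move: hp; rewrite -!muln2 => hp; lia.
have hH : (1 <= H)%N.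
  by rewrite /H -(leq_double 1) -[X in (_ <= X)%N](odd_double_half r) in hr *; move: hr; rewrite -!muln2; lia.
have hMe : (e <= M)%N by rewrite /M leq_pmull.
have hal : (al <= e)%N by rewrite /al; case: (odd r); rewrite ?mul1n ?mul0n.
have hp2 := odd_double_half p.
have ho1 : (odd p <= 1)%N by case: (odd p).
set j0 := ((p./2).*2)%N.
have hj0 : (j0 < k.+1)%N by rewrite ltnS /j0 /k; move: hp2; rewrite -!muln2; lia.
have ekj : (k - j0)%N = ((p - p./2).*2)%N by rewrite /k /j0; move: hp2; rewrite -!muln2; lia.
have hpos : (0 < \sum_(j < k.+1) 'C(k, j) * (Nf al M j (k - j) * Nf al M (k - j) j))%N.
  rewrite (bigD1 (Ordinal hj0)) //= addn_gt0; apply/orP; left.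
  rewrite !muln_gt0 bin_gt0 -ltnS hj0 /=; apply/andP; split.
    rewrite ekj; apply: Nf_pos.
      move: hp2 hk hn hMe hal ho1; rewrite /k /j0 -!muln2; lia.
    move: hp2 hk hn; rewrite /k /j0 -!muln2; lia.
  rewrite {2}/j0; apply: Nf_pos.
    move: hp2 hk hn hMe hal ho1; rewrite /k -!muln2; lia.
  rewrite ekj; move: hp2 hk hn; rewrite /k -!muln2; lia.
apply/negP => /eqP T0.
move: key; rewrite T0 meval0 meval0 hsum => /esym /eqP.
rewrite mulf_eq0 (negbTE hc) /= natF => /eqP h0; by move: hpos; rewrite h0.
Qed.
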